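(* Let $n\ge1$ and let $c_0,\dots,c_{n-1}$ be mutually distinct complex numbers with $|c_j|=1$. Suppose there exist nonzero real numbers $x_0,\dots,x_{n-1}$ such that $$\sum_{j=0}^{n-1}c_j^kx_j=\delta_{k0},\qquad k=0,1,\dots,n-1 .$$ Then $x_j=1/n$ for all $j$, and, after a suitable reordering of $c_1,\dots,c_{n-1}$, $c_j=c_0e^{2\pi ij/n}$ for $j=0,1,\dots,n-1$.
   Context: $\delta_{k0}$ denotes the Kronecker delta. *)

(* Defs.v *)
From mathcomp Require Import all_boot all_algebra.
From mathcomp Require Import reals trigo.
From mathcomp Require Export complex.
Import GRing.Theory Num.Theory.
Local Open Scope ring_scope.
Local Open Scope complex_scope.

Definition expi {R : realType} (t : R) : R[i] := cos t +i* sin t.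

(* Main.v *)
Require Import Defs.
From mathcomp Require Import all_boot all_algebra all_fingroup.
From mathcomp Require Import reals trigo complex.
From mathcomp Require Import order ring lra.
Import Order.TTheory GRing.Theory Num.Theory.
Local Open Scope ring_scope.
Local Open Scope complex_scope.

Section S.
Variable R : realType.

Lemma expiD (a b : R) : expi (a + b) = expi a * expi b.
Proof. by rewrite /expi cosD sinD; apply/eqP; rewrite eq_complex /= !eqxx addrC eqxx. Qed.

Lemma expi0 : expi (0:R) = 1.
Proof. by rewrite /expi cos0 sin0. Qed.

Lemma expiMn (a : R) k : expi (a *+ k) = expi a ^+ k.
Proof. elim: k => [|k IH]; first by rewrite mulr0n expi0.
by rewrite mulrSr expiD IH exprSr. Qed.

Lemma expi2pin k : expi ((pi *+ 2) *+ k) = 1 :> R[i].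
Proof.
have := periodicn (@cosD2pi R) k 0; have := periodicn (@sinD2pi R) k 0.
rewrite !add0r cos0 sin0 /expi => -> -> //.
Qed.

Lemma expi_eq1 (t : R) : 0 < t < pi *+ 2 -> expi t != 1.
Proof.
move=> /andP[t0 t2]; apply/negP => /eqP [] c1 s0.
case: (ltgtP t pi) => tp.
- by move: (@sin_gt0_pi R t); rewrite t0 tp s0 ltxx => /(_ isT).
- have h : 0 < t - pi < pi by rewrite subr_gt0 tp ltrBlDr -mulr2n.
  move: (@sin_gt0_pi R _ h); have := sinDpi (t - pi); rewrite subrK s0.
  by move=> /eqP; rewrite eq_sym oppr_eq0 => /eqP ->; rewrite ltxx.
- by move: c1; rewrite tp cospi; lra.
Qed.
End S.
Section S2.
Variable R : realType.
Variable n : nat.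
Hypothesis hn : (0 < n)%N.
Definition hh (m : 'I_n) : R[i] := expi (2 * pi * (val m)%:R / n%:R).

Lemma hh_root m : hh m ^+ n = 1.
Proof.
rewrite /hh -expiMn -(expi2pin R m); congr expi.
rewrite -(mulr_natr (_ / n%:R) n) divfK ?pnatr_eq0 -?lt0n //.
by rewrite mulr_natr mulr_natl.
Qed.

Lemma hh0 : hh (Ordinal hn) = 1.
Proof. by rewrite /hh /= mulr0 mul0r expi0. Qed.

Lemma hh_inj : injective hh.
Proof.
have key : forall m m' : 'I_n, (m < m')%N -> hh m != hh m'.
  move=> m m' lt; rewrite /hh.
  set a := 2 * pi * (val m)%:R / n%:R; set b := 2 * pi * (val m')%:R / n%:R.
  have -> : b = a + (b - a) by rewrite addrC subrK.
  rewrite expiD.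
  have nz : expi a != 0.
    apply/eqP => h; have := expiD R a (-a); rewrite subrr expi0 h mul0r.
    by move/eqP; rewrite oner_eq0.
  rewrite -{1}[expi a]mulr1; apply/negP => /eqP/mulfI => /(_ nz) /esym /eqP.
  apply/negP; apply: expi_eq1.
  have n0 : (0 : R) < n%:R by rewrite ltr0n.
  have -> : b - a = 2 * pi * ((val m')%:R - (val m)%:R) / n%:R.
    by rewrite /a /b -mulrBl -mulrBr.
  have p0 := @pi_gt0 R.
  have d0 : (0:R) < (val m')%:R - (val m)%:R by rewrite subr_gt0 ltr_nat.
  have d1 : (val m')%:R - (val m)%:R < (n%:R : R).
    have : ((val m')%:R : R) < n%:R by rewrite ltr_nat ltn_ord.
    have : (0:R) <= (val m)%:R by rewrite ler0n.
    lra.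
  apply/andP; split; first by apply: divr_gt0 => //; apply: mulr_gt0 => //; lra.
  rewrite ltr_pdivrMr //.
  have -> : pi *+ 2 = 2 * pi :> R by lra.
  nra.
move=> m m' e; apply/eqP; case: (ltngtP m m') => // h.
- by move: (key _ _ h); rewrite e eqxx.
- by move: (key _ _ h); rewrite e eqxx.
- by apply/eqP/val_inj.
Qed.
End S2.

Theorem lemma2 (R : realType) (n : nat) (hn : (0 < n)%N)
  (c : 'I_n -> R[i]) (x : 'I_n -> R) :
  injective c ->
  (forall j, `|c j| = 1) ->
  (forall j, x j != 0) ->
  (forall k : nat, (k < n)%N ->
     \sum_(j < n) (c j) ^+ k * (x j)%:C = (k == 0%N)%:R) ->
  (forall j, x j = 1 / n%:R) /\
  exists s : {perm 'I_n},
    s (Ordinal hn) = Ordinal hn /\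
    forall j : 'I_n,
      c (s j) = c (Ordinal hn) * expi (2 * pi * (val j)%:R / n%:R).
Proof.
move=> cinj cn1 x0 hmom.
have cc : forall j, c j * (c j)^* = 1.
  by move=> j; rewrite -[LHS]sqr_sqrtc -normcE cn1 expr1n.
have ccl : forall j, (c j)^* * c j = 1 by move=> j; rewrite mulrC cc.
have mom : forall a b : nat, (a < n)%N -> (b < n)%N ->
    \sum_(j<n) ((c j)^*)^+a * (x j)%:C * c j ^+ b = (a == b)%:R.
  move=> a b ha hb; case: (leqP a b) => hab.
  - have e : forall j, ((c j)^*)^+a * (x j)%:C * c j ^+ b = c j ^+ (b - a) * (x j)%:C.
      move=> j; have -> : c j ^+ b = c j ^+ a * c j ^+ (b-a) by rewrite -exprD subnKC.
      have u1 : (c j)^* ^+ a * c j ^+ a = 1 by rewrite -exprMn ccl expr1n.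
      transitivity (((c j)^* ^+ a * c j ^+ a) * (c j ^+ (b-a) * (x j)%:C)); first by ring.
      by rewrite u1 mul1r.
    rewrite (eq_bigr _ (fun j _ => e j)) hmom; last by rewrite (leq_ltn_trans (leq_subr _ _) hb).
    by rewrite subn_eq0 eqn_leq hab.
  - have e : forall j, ((c j)^*)^+a * (x j)%:C * c j ^+ b = ((c j ^+ (a - b) * (x j)%:C))^*.
      move=> j; rewrite rmorphM rmorphXn /= oppr0 -/((x j)%:C).
      have -> : (c j)^* ^+ a = (c j)^* ^+ b * (c j)^* ^+ (a-b) by rewrite -exprD subnKC // ltnW.
      have u1 : (c j)^* ^+ b * c j ^+ b = 1 by rewrite -exprMn ccl expr1n.
      transitivity (((c j)^* ^+ b * c j ^+ b) * ((c j)^* ^+ (a-b) * (x j)%:C)); first by ring.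
      by rewrite u1 mul1r.
    rewrite (eq_bigr _ (fun j _ => e j)) -raddf_sum hmom; last by rewrite (leq_ltn_trans (leq_subr _ _) ha).
    rewrite subn_eq0 leqNgt hab /= raddf0.
    by move: hab; rewrite ltn_neqAle eq_sym => /andP[/negbTE -> _].
pose U : 'M[R[i]]_n := \matrix_(j < n, k < n) c j ^+ k.
pose fA := fun (a j : 'I_n) => ((c j)^*)^+a * (x j)%:C.
pose A : 'M[R[i]]_n := \matrix_(a < n, j < n) fA a j.
have AU : A *m U = 1%:M.
  apply/matrixP => a b; rewrite !mxE.
  under eq_bigr do rewrite !mxE.
  by rewrite mom.
have UA := mulmx1C AU.
have key : forall j l : 'I_n,
    \sum_(k<n) c j ^+ k * (((c l)^*)^+k * (x l)%:C) = (j == l)%:R.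
  move=> j l; have := congr1 (fun M : 'M[R[i]]_n => M j l) UA; rewrite !mxE => <-.
  by apply: eq_bigr => k _; rewrite !mxE.
have nz : (n%:R : R) != 0 by rewrite pnatr_eq0 -lt0n.
have hx : forall j, x j = 1 / n%:R.
  move=> j; have := key j j; rewrite eqxx.
  have e : forall k : 'I_n, c j ^+ k * (((c j)^*)^+k * (x j)%:C) = (x j)%:C.
    by move=> k; rewrite mulrA -exprMn cc expr1n mul1r.
  rewrite (eq_bigr _ (fun k _ => e k)) sumr_const card_ord -rmorphMn.
  move/(congr1 (@complex.Re R)) => /= e1.
  by apply: (mulIf nz); rewrite div1r mulVf // mulr_natr.
split => //.
pose g j := c j * (c (Ordinal hn))^*.
have groot : forall j, g j ^+ n = 1.
  move=> j; case: (eqVneq j (Ordinal hn)) => [->|ne]; first by rewrite /g cc expr1n.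
  have := key j (Ordinal hn); rewrite (negbTE ne).
  under eq_bigr => k _ do rewrite mulrA -exprMn.
  rewrite -mulr_suml => /eqP; rewrite mulf_eq0 => /orP[/eqP s0|].
    by apply/eqP; rewrite -subr_eq0 subrX1 s0 mulr0.
  move/eqP/(congr1 (@complex.Re R)) => /= xz; by move: (x0 (Ordinal hn)); rewrite xz eqxx.
have c0nz : (c (Ordinal hn))^* != 0.
  by rewrite -unitfE; apply/unitrPr; exists (c (Ordinal hn)); exact: ccl.
have ginj : injective g by move=> j j' /(mulIf c0nz) /cinj.
have hroot : forall j, exists m, g j = hh R n m.
  move=> j; have : g j \in map (hh R n) (enum 'I_n).
    apply/negPn/negP => nin.
    have pnz : ('X^n - 1%:P : {poly R[i]}) != 0.
      by rewrite -size_poly_eq0 size_XnsubC.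
    have := max_poly_roots pnz (rs := g j :: map (hh R n) (enum 'I_n)).
    rewrite size_XnsubC // /= size_map size_enum_ord ltnn.
    have u1 : (g j \notin [seq hh R n i | i <- enum 'I_n]) && uniq [seq hh R n i | i <- enum 'I_n].
      by rewrite nin map_inj_uniq ?enum_uniq //; exact: hh_inj.
    have r1 : root ('X^n - 1%:P) (g j) && all (root ('X^n - 1%:P)) [seq hh R n i | i <- enum 'I_n].
      rewrite /root !hornerE groot subrr eqxx /=.
      apply/allP => z /mapP [m _ ->]; by rewrite /root !hornerE (hh_root R n hn) subrr.
    by move/(_ r1 u1).
  by case/mapP => m _ ->; exists m.
pose t l := odflt (Ordinal hn) [pick m | g l == hh R n m].
have ht : forall l, g l = hh R n (t l).
  move=> l; rewrite /t; case: pickP => [m /eqP //| none].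
  by case: (hroot l) => m e; move: (none m); rewrite e eqxx.
have tinj : injective t by move=> l l' e; apply: ginj; rewrite !ht e.
pose s := ((perm tinj)^-1)%g.
have ts : forall j, t (s j) = j by move=> j; have := permKV (perm tinj) j; rewrite permE.
have t0 : t (Ordinal hn) = Ordinal hn.
  by apply: (hh_inj R n hn); rewrite -ht (hh0 R n hn) /g cc.
exists s; split.
  by rewrite -{1}t0 -(permE tinj) permK.
move=> j; have := ht (s j); rewrite ts /g => e.
have e2 : c (s j) * (c (Ordinal hn))^* = expi (2 * pi * (val j)%:R / n%:R) := e.
by rewrite -e2 mulrCA cc mulr1.
Qed.
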